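(* Consider the iterative minimum repairing algorithm IMR($p$) described in the context. If the estimated parameters converge, i.e. $\lim_{k\to+\infty}\phi^{(k)}=\phi$ for some $\phi\in\mathbb{R}^p$, then the repair also converges: $$\lim_{k\to+\infty}\sum_{i=1}^n\left(y_i^{(k+1)}-y_i^{(k)}\right)=0.$$
   Context: Let $n\ge 1$ and let $x=(x_1,\dots,x_n)\in\mathbb{R}^n$ be an observed time series. A set $L\subseteq\{1,\dots,n\}$ of labeled indices is given, together with labeled values $y^{(0)}_t$ for $t\in L$; for $t\notin L$ put $y^{(0)}_t=x_t$. Fix an order $p\ge 1$ and a threshold $\tau\ge 0$. IMR($p$) produces sequences $y^{(k)}\in\mathbb{R}^n$, $k=0,1,2,\dots$; write $z^{(k)}_t=y^{(k)}_t-x_t$. In iteration $k$: (S1) Parameter estimation by ordinary least squares: $\phi^{(k)}=(\phi^{(k)}_1,\dots,\phi^{(k)}_p)^\top=((Z^{(k)})^\top Z^{(k)})^{-1}(Z^{(k)})^\top V^{(k)}$, where $V^{(k)}=(z^{(k)}_{p+1},\dots,z^{(k)}_n)^\top$ and $Z^{(k)}$ is the $(n-p)\times p$ matrix whose $r$-th row ($r=1,\dots,n-p$) is $(z^{(k)}_{r+p-1},z^{(k)}_{r+p-2},\dots,z^{(k)}_{r})$. (S2) For each $t\in\{p+1,\dots,n\}\setminus L$ compute $\hat y^{(k)}_t=\sum_{i=1}^p\phi^{(k)}_i z^{(k)}_{t-i}+x_t$; $t$ is a candidate only if $|\hat y^{(k)}_t-y^{(k)}_t|>\tau$. (S3) If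 candidates exist, choose a candidate $t^*$ minimizing $|\hat y^{(k)}_t-x_t|$ (ties broken arbitrarily), set $y^{(k+1)}_{t^*}=\hat y^{(k)}_{t^*}$ and keep all other values; if no candidate exists, the algorithm terminates and $y^{(k+1)}=y^{(k)}$ from then on. Labeled values are never modified. *)

(* Defs.v *)
From HB Require Import structures.
From mathcomp Require Import all_boot all_order all_algebra.
From mathcomp Require Import all_classical all_reals all_analysis.
Set Implicit Arguments. Unset Strict Implicit. Unset Printing Implicit Defensive.
Import Order.TTheory GRing.Theory Num.Theory.
Local Open Scope ring_scope.

(* Time series are indexed 1..n and represented as functions nat -> R;
   index 0 (and indices > n) are never used. *)

Section IMR.
Variable R : realType.

(* The (n-p) x p design matrix Z: row r (0-based, paper row r+1),
   column i (0-based, paper column i+1) holds z_{(r+1)+p-(i+1)} = z_{r+p-i}. *)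
Definition imr_Z (n p : nat) (z : nat -> R) : 'M[R]_(n - p, p) :=
  \matrix_(r < n - p, i < p) z (r + p - i)%N.

Definition imr_V (n p : nat) (z : nat -> R) : 'cV[R]_(n - p) :=
  \col_(r < n - p) z (r + p + 1)%N.

Definition imr_z (x y : nat -> R) : nat -> R := fun t => y t - x t.

(* OLS estimate phi = (Z^T Z)^{-1} Z^T V; entry i (0-based) is phi_{i+1}. *)
Definition imr_phi (n p : nat) (x y : nat -> R) : 'cV[R]_p :=
  let Z := imr_Z n p (imr_z x y) in
  invmx (Z^T *m Z) *m (Z^T *m imr_V n p (imr_z x y)).

Definition imr_ols_defined (n p : nat) (x y : nat -> R) : Prop :=
  let Z := imr_Z n p (imr_z x y) in (Z^T *m Z) \in unitmx.

Definition imr_yhat (n p : nat) (x y : nat -> R) (t : nat) : R :=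
  \sum_(i < p) imr_phi n p x y i ord0 * imr_z x y (t - i.+1)%N + x t.

Definition imr_cand (n p : nat) (tau : R) (L : nat -> bool) (x y : nat -> R)
  (t : nat) : bool :=
  [&& (p.+1 <= t)%N, (t <= n)%N, ~~ L t & tau < `|imr_yhat n p x y t - y t|].

(* One iteration (S1)-(S3) of IMR(p), from y^(k) = y to y^(k+1) = y'
   (only indices 1..n are constrained). Ties are broken arbitrarily. *)
Definition imr_step (n p : nat) (tau : R) (L : nat -> bool) (x y y' : nat -> R)
  : Prop :=
  (exists ts : nat,
      imr_cand n p tau L x y ts /\
      (forall t, imr_cand n p tau L x y t ->
         `|imr_yhat n p x y ts - x ts| <= `|imr_yhat n p x y t - x t|) /\
      (forall t, (1 <= t <= n)%N ->
         y' t = if t == ts then imr_yhat n p x y ts else y t))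
  \/
  ((forall t, ~~ imr_cand n p tau L x y t) /\
   (forall t, (1 <= t <= n)%N -> y' t = y t)).

End IMR.

(* Main.v *)
Require Import Defs.
From HB Require Import structures.
From mathcomp Require Import all_boot all_order all_algebra.
From mathcomp Require Import all_classical all_reals all_analysis.
From mathcomp Require Import zify.
Import Order.TTheory GRing.Theory Num.Theory.
Import numFieldNormedType.Exports.
Local Open Scope classical_set_scope.
Local Open Scope ring_scope.

Lemma switch_cvg (R : realType) (a w : nat -> R) (c : R) :
  (forall k, a k.+1 = a k \/ a k.+1 = w k) -> w @ \oo --> (c : R) ->
  exists l : R, a @ \oo --> l.
Proof.
move=> H wc.
have [[K HK]|nK] := pselect (exists K, forall k, (K <= k)%N -> a k.+1 = a k).
  exists (a K); apply: cvg_near_cst.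
  have hm : forall m, a (K + m)%N = a K.
    by elim=> [|m IH]; rewrite ?addn0 // addnS HK ?leq_addr.
  exists K => // k /= Kk; by rewrite -(subnKC Kk) hm.
exists c; apply/cvgrPdist_lt => e e0.
move/cvgrPdist_lt: wc => /(_ e e0) [N _ HN].
have [k0 [Nk0 hk0]] : exists k, (N <= k)%N /\ a k.+1 <> a k.
  apply: contrapT => H0; apply: nK; exists N => k Nk.
  by apply: contrapT => hne; apply: H0; exists k.
have ak0 : a k0.+1 = w k0 by case: (H k0).
have hm : forall m, `|c - a (k0.+1 + m)%N| < e.
  elim=> [|m IH]; first by rewrite addn0 ak0; apply: HN.
  rewrite addnS; case: (H (k0.+1 + m)%N) => ->//.
  apply: HN => /=; apply: leq_trans Nk0 _; apply: leq_trans (leqnSn _) _.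
  exact: leq_addr.
exists k0.+1 => // k /= Kk; by rewrite -(subnKC Kk) hm.
Qed.

Lemma cvg_sum_ex (R : realType) (I : eqType) (s : seq I) (f : I -> nat -> R) :
  (forall i, i \in s -> exists l : R, f i @ \oo --> l) ->
  exists l : R, (fun k => \sum_(i <- s) f i k) @ \oo --> l.
Proof.
elim: s => [|i s IH] hf.
  exists 0; under eq_fun do rewrite big_nil; exact: cvg_cst.
have [l1 h1] := hf i (mem_head _ _).
have [l2 h2] : exists l : R, (fun k => \sum_(j <- s) f j k) @ \oo --> l.
  by apply: IH => j js; apply: hf; rewrite in_cons js orbT.
exists (l1 + l2); under eq_fun do rewrite big_cons.
exact: cvgD.
Qed.

Lemma cvg_sum0 (R : realType) (I : eqType) (s : seq I) (f : I -> nat -> R) :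
  (forall i, i \in s -> f i @ \oo --> (0 : R)) ->
  (fun k => \sum_(i <- s) f i k) @ \oo --> (0 : R).
Proof.
elim: s => [|i s IH] hf.
  under eq_fun do rewrite big_nil; exact: cvg_cst.
under eq_fun do rewrite big_cons.
have h2 : (fun k => \sum_(j <- s) f j k) @ \oo --> (0 : R).
  by apply: IH => j js; apply: hf; rewrite in_cons js orbT.
have := cvgD (hf i (mem_head _ _)) h2; rewrite addr0; exact.
Qed.

Theorem proposition3 (R : realType) (n p : nat) (tau : R)
  (x : nat -> R) (L : nat -> bool) (y : nat -> nat -> R) :
  (1 <= n)%N -> (1 <= p)%N -> 0 <= tau ->
  (forall t, L t -> (1 <= t <= n)%N) ->
  (forall t, (1 <= t <= n)%N -> ~~ L t -> y 0%N t = x t) ->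
  (forall k, imr_ols_defined n p x (y k)) ->
  (forall k, imr_step n p tau L x (y k) (y k.+1)) ->
  (exists phi : 'cV[R]_p, (fun k => imr_phi n p x (y k)) @ \oo --> phi) ->
  (fun k => \sum_(1 <= i < n.+1) (y k.+1 i - y k i)) @ \oo --> (0 : R).
Proof.
move=> _ _ _ _ _ _ hstep [phi hphi].
have sf : forall k t, (1 <= t <= n)%N -> y k.+1 t = y k t \/
    [/\ (p < t)%N, ~~ L t & y k.+1 t = imr_yhat n p x (y k) t].
  move=> k t ht; case: (hstep k) => [[ts [hc [_ hy]]] | [_ hy]]; rewrite hy //; last by left.
  case: eqP => [->|]; last by left.
  by right; move/and4P: hc => [h1 h2 h3 _].
have hent : forall i : 'I_p, (fun k => imr_phi n p x (y k) i ord0) @ \oo --> phi i ord0.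
  move=> i; have := cvg_comp _ _ hphi (@coord_continuous R p 1 i ord0 phi); exact.
have main : forall t, (1 <= t <= n)%N -> exists l : R, (fun k => y k t - x t) @ \oo --> l.
  elim/ltn_ind => t IH ht.
  case hPL: ((p < t)%N && ~~ L t).
    move/andP: hPL => [hpt hLt].
    have [c hc] : exists c : R,
        (fun k => \sum_(i <- index_enum 'I_p) imr_phi n p x (y k) i ord0 * imr_z x (y k) (t - i.+1)) @ \oo --> c.
      apply: cvg_sum_ex => i _.
      have [l hl] : exists l : R, (fun k => y k (t - i.+1)%N - x (t - i.+1)%N) @ \oo --> l.
        have hi := ltn_ord i; case/andP: ht => h1 h2.
        apply: IH; first lia.
        apply/andP; split; lia.
      exists (phi i ord0 * l); apply: cvgM => //; exact: hent.
    apply: (@switch_cvg R _ _ c _ hc) => k.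
    case: (sf k t ht) => [->|[_ _ ->]]; [by left | right].
    by rewrite /imr_yhat addrK.
  apply: (@switch_cvg R _ (fun _ => 0) 0); last exact: cvg_cst.
  move=> k; left; case: (sf k t ht) => [->//|[h1 h2 _]].
  by move: hPL; rewrite h1 h2.
apply: cvg_sum0 => i; rewrite mem_index_iota => hi.
have [l hl] := main i hi.
have h1 : (fun k => y k.+1 i - x i) @ \oo --> l.
  by have := hl; rewrite -cvg_shiftS.
have -> : (fun k => y k.+1 i - y k i) = (fun k => (y k.+1 i - x i) - (y k i - x i)).
  by apply: funext => k; rewrite opprB addrA subrK.
have := cvgB h1 hl; rewrite subrr; exact.
Qed.
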